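(* Let $\lambda_1,\lambda_2$ be as in the context. For any $(c,\theta)\in\Omega$ and any $B\in[\lambda_2^2,\lambda_1^2]$ we have $$c^2+2\cos\theta\,B-\frac{\sin^2\theta}{c^2}B^2>0.$$
   Context: Either $\lambda_1>\lambda_2>0$ or $\lambda_1=\lambda_2=1$. For $c>0$ put $\theta_c^+=\pi$ if $c>\sqrt2\lambda_1$ and $\theta_c^+=\arccos(1-c^2/\lambda_1^2)\in(0,\pi]$ if $0<c\le\sqrt2\lambda_1$. $\Omega=\{(c,\theta)\in\mathbb{R}^2: c>0,\ \theta\in(-\theta_c^+,\theta_c^+)\}$. *)

(* Defs.v *)
From Stdlib Require Export Reals.
Open Scope R_scope.

Definition lambda_ok (l1 l2 : R) : Prop :=
  (l1 > l2 /\ l2 > 0) \/ (l1 = 1 /\ l2 = 1).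

Definition theta_plus (l1 c : R) : R :=
  if Rle_dec c (sqrt 2 * l1) then acos (1 - c ^ 2 / l1 ^ 2) else PI.

Definition in_Omega (l1 c theta : R) : Prop :=
  c > 0 /\ - theta_plus l1 c < theta /\ theta < theta_plus l1 c.

(* Main.v *)
Require Import Defs.
From Stdlib Require Import Reals Lra Psatz.
Open Scope R_scope.

Theorem lemma5p1 (l1 l2 c theta B : R) :
  lambda_ok l1 l2 ->
  in_Omega l1 c theta ->
  l2 ^ 2 <= B <= l1 ^ 2 ->
  c ^ 2 + 2 * cos theta * B - (sin theta ^ 2 / c ^ 2) * B ^ 2 > 0.
Proof.
  intros Hl [Hc [Ht1 Ht2]] [HB1 HB2].
  assert (Hl1 : l1 > 0) by (destruct Hl as [[? ?]|[? ?]]; lra).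
  assert (Hl2 : l2 > 0) by (destruct Hl as [[? ?]|[? ?]]; lra).
  assert (HBp : B > 0) by nra.
  assert (Hcs : sin theta ^ 2 = 1 - cos theta ^ 2)
    by (pose proof (sin2_cos2 theta); unfold Rsqr in *; lra).
  pose proof (COS_bound theta) as [Hcb1 Hcb2].
  assert (Key : c ^ 2 > l1 ^ 2 * (1 - cos theta)).
  { unfold theta_plus in *.
    destruct (Rle_dec c (sqrt 2 * l1)) as [Hle|Hgt].
    - set (a := 1 - c ^ 2 / l1 ^ 2) in *.
      assert (Hs2 : sqrt 2 * sqrt 2 = 2) by (apply sqrt_sqrt; lra).
      assert (Hsq : sqrt 2 > 0) by (apply sqrt_lt_R0; lra).
      assert (Hc2 : c ^ 2 <= 2 * l1 ^ 2).
      { assert (c * c <= (sqrt 2 * l1) * (sqrt 2 * l1)) by nra. nra. }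
      assert (Hl1p : l1 ^ 2 > 0) by nra.
      assert (Ha : -1 <= a <= 1).
      { unfold a. split.
        - assert (c ^ 2 / l1 ^ 2 <= 2).
          { apply Rmult_le_reg_r with (l1 ^ 2); auto.
            unfold Rdiv; rewrite Rmult_assoc, Rinv_l by lra. lra. }
          lra.
        - assert (0 <= c ^ 2 / l1 ^ 2).
          { unfold Rdiv; apply Rmult_le_pos; [nra | left; apply Rinv_0_lt_compat; lra]. }
          lra. }
      pose proof (acos_bound a) as [A1 A2].
      assert (Hcos : cos theta > a).
      { rewrite <- (cos_acos a Ha).
        destruct (Rle_dec 0 theta).
        - apply cos_decreasing_1; lra.
        - rewrite <- cos_neg. apply cos_decreasing_1; lra. }
      assert (Hm : l1 ^ 2 * a = l1 ^ 2 - c ^ 2).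
      { unfold a. field. lra. }
      nra.
    - assert (Hs2 : sqrt 2 * sqrt 2 = 2) by (apply sqrt_sqrt; lra).
      assert (Hsq : sqrt 2 > 0) by (apply sqrt_lt_R0; lra).
      apply Rnot_le_lt in Hgt. assert (c * c > (sqrt 2 * l1) * (sqrt 2 * l1)) by (apply Rmult_le_0_lt_compat; nra).
      nra. }
  assert (Hg : (c ^ 2 - B * (1 - cos theta)) * (c ^ 2 + B * (1 + cos theta)) > 0).
  { apply Rmult_gt_0_compat; nra. }
  assert (Hc2 : c ^ 2 > 0) by nra.
  assert (E : c ^ 2 + 2 * cos theta * B - (sin theta ^ 2 / c ^ 2) * B ^ 2
              = ((c ^ 2 - B * (1 - cos theta)) * (c ^ 2 + B * (1 + cos theta))) / c ^ 2).
  { rewrite Hcs. field. lra. }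
  rewrite E. apply Rdiv_lt_0_compat; lra.
Qed.
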